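(* Let $v=(1/N,\dots,1/N)$ be the center of $\Delta$. Then $v$ is a linearly stable equilibrium if $\alpha<(N-1)/(N-2)$, and a linearly unstable equilibrium if $\alpha>(N-1)/(N-2)$.
   Context: Let $N\ge3$, $\alpha>1$, and $A_{i,j}=1-\delta_{i,j}$ for $i,j\le N$. Let $\Delta=\{v\in\mathbb R_+^N:\sum_iv_i=1,\ v_i\le3/4\ \forall i\}$. For $v$ with nonnegative coordinates let $v^\alpha=(v_i^\alpha)_i$, $H(v)=\sum_{i\neq j}v_i^\alpha v_j^\alpha$, $\pi_i(v)=v_i^\alpha(Av^\alpha)_i/H(v)$, and on $\Delta$ let $F(v)=-v+\pi(v)$. An equilibrium is $v\in\Delta$ with $F(v)=0$. With $DF(v)$ the differential at $v$ of $v\mapsto-v+\pi(v)$ acting on $\{x:\sum_ix_i=0\}$, an equilibrium is linearly stable if all eigenvalues of $DF(v)$ have negative real parts and linearly unstable if some eigenvalue has positive real part. *)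

(* Defs.v *)
From HB Require Import structures.
From mathcomp Require Import all_boot all_order all_algebra.
From mathcomp Require Import all_classical all_reals all_analysis.
Set Implicit Arguments. Unset Strict Implicit. Unset Printing Implicit Defensive.
Import Order.TTheory GRing.Theory Num.Theory.
Import numFieldNormedType.Exports.
Local Open Scope ring_scope.

Section Defs.
Variables (R : realType) (N : nat) (alpha : R).

Definition Amat : 'M[R]_N := \matrix_(i, j) (if i == j then 0 else 1).

Definition vpow (v : 'rV[R]_N) : 'rV[R]_N := \row_i (v ord0 i `^ alpha).

Definition Hf (v : 'rV[R]_N) : R :=
  \sum_(i < N) \sum_(j < N | j != i) (vpow v ord0 i) * (vpow v ord0 j).

Definition Avpow (v : 'rV[R]_N) (i : 'I_N) : R :=
  \sum_(j < N) Amat i j * vpow v ord0 j.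

Definition piv (v : 'rV[R]_N) : 'rV[R]_N :=
  \row_i (vpow v ord0 i * Avpow v i / Hf v).

Definition Fv (v : 'rV[R]_N) : 'rV[R]_N := - v + piv v.

Definition Delta : set 'rV[R]_N :=
  [set v | (forall i, 0 <= v ord0 i) /\ \sum_(i < N) v ord0 i = 1
           /\ (forall i, v ord0 i <= 3 / 4)].

Definition equilibrium (v : 'rV[R]_N) : Prop := Delta v /\ Fv v = 0.

Definition tangent (x : 'rV[R]_N) : Prop := \sum_(i < N) x ord0 i = 0.

(* lambda = a + i b is a (complex) eigenvalue of the real linear map L acting
   on the tangent space: there is a nonzero z = x + i y in the complexified
   tangent space with L z = lambda z, i.e. L x = a x - b y, L y = b x + a y. *)
Definition eigenvalue_tangent (L : 'rV[R]_N -> 'rV[R]_N) (a b : R) : Prop :=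
  exists x y : 'rV[R]_N, tangent x /\ tangent y /\ (x != 0 \/ y != 0) /\
    L x = a *: x - b *: y /\ L y = b *: x + a *: y.

Definition linearly_stable (v : 'rV[R]_N) : Prop :=
  equilibrium v /\ differentiable Fv v /\
  (forall a b, eigenvalue_tangent ('d Fv v) a b -> a < 0).

Definition linearly_unstable (v : 'rV[R]_N) : Prop :=
  equilibrium v /\ differentiable Fv v /\
  (exists a b, eigenvalue_tangent ('d Fv v) a b /\ 0 < a).

Definition simplex_center : 'rV[R]_N := const_mx (N%:R^-1).
End Defs.

(* Main.v *)
Require Import Defs.
From HB Require Import structures.
From mathcomp Require Import all_boot all_order all_algebra.
From mathcomp Require Import all_classical all_reals all_analysis.
From mathcomp Require Import ring lra.
Import Order.TTheory GRing.Theory Num.Theory.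
Import numFieldNormedType.Exports.
Local Open Scope ring_scope.

Section DDsec.
Context {R : realType} {V W : normedModType R}.

Definition DD (f : V -> W) (x : V) (df : V -> W) :=
  differentiable f x /\ forall h, 'd f x h = df h.

Lemma DDcst (a : W) x : DD (fun _ => a) x (fun _ => 0).
Proof.
split; first exact: differentiable_cst.
by move=> h; rewrite (diff_cst a x).
Qed.

Lemma DDadd f g df dg x : DD f x df -> DD g x dg ->
  DD (fun y => f y + g y) x (fun h => df h + dg h).
Proof.
move=> [f1 f2] [g1 g2]; split; first exact: differentiableD.
move=> h; have := diffD f1 g1 => /(congr1 (fun F => F h)) /= ->.
by rewrite -f2 -g2.
Qed.

Lemma DDopp f df x : DD f x df -> DD (fun y => - f y) x (fun h => - df h).
Proof.
move=> [f1 f2]; split; first exact: differentiableN.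
move=> h; have := diffN f1 => /(congr1 (fun F => F h)) /= ->.
by rewrite -f2.
Qed.

Lemma DDsum (I : Type) (r : seq I) (P : pred I) (f df : I -> V -> W) x :
  (forall i, P i -> DD (f i) x (df i)) ->
  DD (fun y => \sum_(i <- r | P i) f i y) x (fun h => \sum_(i <- r | P i) df i h).
Proof.
move=> Hf; elim: r => [|i r IH].
  have -> : (fun y => \sum_(i <- [::] | P i) f i y) = (fun _ => 0).
    by apply/funext => y; rewrite big_nil.
  have -> : (fun h => \sum_(i <- [::] | P i) df i h) = (fun _ => 0).
    by apply/funext => y; rewrite big_nil.
  exact: DDcst.
case Pi: (P i).
  have -> : (fun y => \sum_(j <- i :: r | P j) f j y) = (fun y => f i y + \sum_(j <- r | P j) f j y).
    by apply/funext => y; rewrite big_cons Pi.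
  have -> : (fun y => \sum_(j <- i :: r | P j) df j y) = (fun y => df i y + \sum_(j <- r | P j) df j y).
    by apply/funext => y; rewrite big_cons Pi.
  exact: DDadd (Hf _ Pi) IH.
have -> : (fun y => \sum_(j <- i :: r | P j) f j y) = (fun y => \sum_(j <- r | P j) f j y).
  by apply/funext => y; rewrite big_cons Pi.
have -> : (fun y => \sum_(j <- i :: r | P j) df j y) = (fun y => \sum_(j <- r | P j) df j y).
  by apply/funext => y; rewrite big_cons Pi.
exact: IH.
Qed.

End DDsec.

Section DDR.
Context {R : realType} {V : normedModType R}.

Lemma DDmul (f g df dg : V -> R) x : DD f x df -> DD g x dg ->
  DD (fun y => f y * g y) x (fun h => f x * dg h + g x * df h).
Proof.
move=> [f1 f2] [g1 g2]; split; first exact: differentiableM.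
move=> h; have := diffM f1 g1 => /(congr1 (fun F => F h)) /= ->.
by rewrite -f2 -g2.
Qed.

Lemma DDcomp1 (g : R -> R) (f df : V -> R) x :
  differentiable g (f x) -> DD f x df ->
  DD (fun y => g (f y)) x (fun h => df h * derive1 g (f x)).
Proof.
move=> dg [f1 f2]; split; first exact: (differentiable_comp f1 dg).
move=> h; have := diff_comp f1 dg => /(congr1 (fun F => F h)) /= ->.
by rewrite diff1E // f2.
Qed.

Lemma DDinv (f df : V -> R) x : DD f x df -> f x != 0 ->
  DD (fun y => (f y)^-1) x (fun h => - (f x) ^- 2 * df h).
Proof.
move=> [f1 f2] fx; split; first exact: differentiableV.
move=> h; have := diffV f1 fx => /(congr1 (fun F => F h)) /= ->.
by rewrite -f2.
Qed.

End DDR.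

Lemma DDcoord {R : realType} m n (M : 'M[R]_(m, n)) i j :
  DD (fun N : 'M[R]_(m, n) => N i j : R) M (fun N => N i j).
Proof.
have @f : {linear 'M[R]_(m, n) -> R}.
  by exists (fun N : 'M[R]_(_, _) => N i j); do 2![eexists]; do ?[constructor];
     rewrite ?mxE// => ? *; rewrite ?mxE//; move=> ?; rewrite !mxE.
rewrite (_ : (fun _ => _) = f) //; split.
  exact/linear_differentiable/coord_continuous.
by move=> h; rewrite diff_lin //; exact: coord_continuous.
Qed.
Arguments DDadd {R V W f g df dg x}.
Arguments DDopp {R V W f df x}.
Arguments DDmul {R V f g df dg x}.
Arguments DDinv {R V f df x}.

Lemma DDZl {R : realType} {V W : normedModType R} (k dk : V -> R) (f : W) x :
  DD k x dk -> DD (fun z => k z *: f) x (fun h => dk h *: f).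
Proof.
move=> [k1 k2]; split; first exact: differentiableZl.
by move=> h; rewrite diffZl // k2.
Qed.
Local Open Scope ring_scope.

Lemma DDext {R : realType} {V W : normedModType R} (f df dg : V -> W) x :
  DD f x df -> (forall h, df h = dg h) -> DD f x dg.
Proof. by move=> [f1 f2] e; split => // h; rewrite f2 e. Qed.

Lemma DDof {R : realType} {V W : normedModType R} (f : V -> W) x :
  differentiable f x -> DD f x ('d f x).
Proof. by move=> d; split. Qed.

Section Main.
Context (R : realType) (N : nat) (alpha : R).

Let V := 'rV[R]_N.
Let n : R := N%:R.
Let c : V := simplex_center R N.
Let w : R := n^-1 `^ alpha.
Let k : R := derive1 (fun x : R => x `^ alpha) n^-1.

Definition wf (j : 'I_N) (y : V) : R := y ord0 j `^ alpha.
Definition Ai (i : 'I_N) (y : V) : R := \sum_(j < N) Amat R N i j * wf j y.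
Definition Hy (y : V) : R := \sum_(i < N) \sum_(j < N | j != i) wf i y * wf j y.
Definition Fi (i : 'I_N) (y : V) : R := - y ord0 i + wf i y * Ai i y * (Hy y)^-1.

Lemma Fv_coord i y : Fv alpha y ord0 i = Fi i y.
Proof.
rewrite /Fv /piv /Fi !mxE /wf.
have -> : Avpow alpha y i = Ai i y.
  by rewrite /Avpow /Ai; apply: eq_bigr => j _; rewrite /vpow /wf !mxE.
have -> : Hf alpha y = Hy y.
  by rewrite /Hf /Hy; apply: eq_bigr => i' _; apply: eq_bigr => j _; rewrite /vpow /wf !mxE.
by [].
Qed.

Lemma sum_neq (a : 'I_N -> R) i : \sum_(j < N | j != i) a j = \sum_(j < N) a j - a i.
Proof. rewrite [X in _ = X - _](bigD1 i) //=.
by rewrite addrC addrK. Qed.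

Lemma sumA (a : 'I_N -> R) i : \sum_(j < N) Amat R N i j * a j = \sum_(j < N) a j - a i.
Proof.
rewrite (bigD1 i) //= mxE eqxx mul0r add0r -sum_neq.
by apply: eq_bigr => j ji; rewrite mxE eq_sym (negbTE ji) mul1r.
Qed.

Lemma c_entry j : c ord0 j = n^-1.
Proof. by rewrite /c /simplex_center mxE. Qed.

Lemma wf_c j : wf j c = w.
Proof. by rewrite /wf c_entry. Qed.

Lemma Ai_c i : Ai i c = (n - 1) * w.
Proof.
rewrite /Ai sumA wf_c.
under eq_bigr do rewrite wf_c.
by rewrite sumr_const card_ord -mulr_natl mulrBl mul1r.
Qed.

Lemma Hy_c : Hy c = n * ((n - 1) * w * w).
Proof.
rewrite /Hy (eq_bigr (fun _ => (n - 1) * w * w)).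
  by rewrite sumr_const card_ord -mulr_natl.
move=> i _; rewrite sum_neq !wf_c.
under eq_bigr do rewrite !wf_c.
rewrite sumr_const card_ord -mulr_natl -/n mulrBl mul1r mulrA.
by ring.
Qed.

Context (N0 : (0 < N)%N).

Lemma n_gt0 : 0 < n. Proof. by rewrite /n ltr0n. Qed.

Lemma DDwf j : DD (wf j) c (fun h => h ord0 j * k).
Proof.
have := @DDcomp1 R V (fun x : R => x `^ alpha) (fun y : V => y ord0 j) (fun h => h ord0 j) c.
rewrite c_entry; apply.
  apply/derivable1_diffP/derivable_powR.
  by rewrite in_itv /= andbT invr_gt0 n_gt0.
exact: DDcoord.
Qed.

Definition sh (h : V) : R := \sum_(j < N) h ord0 j.

Lemma DDAi i : DD (Ai i) c (fun h => k * (sh h - h ord0 i)).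
Proof.
apply: DDext.
  apply: (@DDsum R V R _ (index_enum 'I_N) xpredT
     (fun j y => Amat R N i j * wf j y)
     (fun j h => Amat R N i j * (h ord0 j * k) + wf j c * 0)).
  move=> j _ /=; have := (DDmul (DDcst (Amat R N i j) c) (DDwf j)). by move=> H; exact: H.
move=> h /=.
under eq_bigr do rewrite mulr0 addr0.
rewrite sumA /sh mulrBr mulr_sumr mulrC; congr (_ - _).
by apply: eq_bigr => j _; rewrite mulrC.
Qed.

Lemma DDHy : DD Hy c (fun h => 2 * (n - 1) * w * k * sh h).
Proof.
apply: DDext.
  apply: (@DDsum R V R _ (index_enum 'I_N) xpredT
     (fun i y => \sum_(j < N | j != i) wf i y * wf j y)
     (fun i h => \sum_(j < N | j != i) (wf i c * (h ord0 j * k) + wf j c * (h ord0 i * k)))).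
  move=> i _ /=.
  apply: (@DDsum R V R _ (index_enum 'I_N) (fun j => j != i)
     (fun j y => wf i y * wf j y)
     (fun j h => wf i c * (h ord0 j * k) + wf j c * (h ord0 i * k))).
  by move=> j _ /=; have := DDmul (DDwf i) (DDwf j); move=> H; exact: H.
move=> h /=.
rewrite (eq_bigr (fun i => w * k * (sh h - h ord0 i) + (n - 1) * w * k * h ord0 i)).
  rewrite big_split /= -!mulr_sumr sumrB sumr_const card_ord /sh -/n.
  rewrite -mulr_natl; ring.
move=> i _; rewrite big_split /= !sum_neq !wf_c.
under [X in _ + (X - _)]eq_bigr => j _ do rewrite wf_c.
rewrite sumr_const card_ord -mulr_natl -/n.
rewrite (eq_bigr (fun j => w * k * h ord0 j)); last by move=> j _; ring.
rewrite -mulr_sumr /sh; ring.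
Qed.

Lemma w_gt0 : 0 < w.
Proof. by rewrite /w powR_gt0 // invr_gt0 n_gt0. Qed.

Lemma k_val : k = alpha * w * n.
Proof.
rewrite /k powR_derive1; last by rewrite in_itv /= andbT invr_gt0 n_gt0.
rewrite powRB; last by apply/implyP => _; rewrite invr_eq0 gt_eqF ?n_gt0.
rewrite powRr1; last by rewrite invr_ge0 ltW // n_gt0.
by rewrite invrK mulrA.
Qed.

Context (N3 : (3 <= N)%N).

Lemma n_gt2 : 2 < n.
Proof. by rewrite /n ltr_nat. Qed.

Lemma Hy_c_neq0 : Hy c != 0.
Proof.
rewrite Hy_c; have := n_gt2; have := w_gt0 => hw hn.
rewrite gt_eqF // mulr_gt0 //; first lra.
by rewrite !mulr_gt0 //; lra.
Qed.

Definition lam : R := -1 + alpha * (n - 2) / (n - 1).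

Lemma dFi_all i : DD (Fi i) c (fun h => - h ord0 i + (wf i c * Ai i c * (- Hy c ^- 2 * (2 * (n - 1) * w * k * sh h)) + (Hy c)^-1 * (wf i c * (k * (sh h - h ord0 i)) + Ai i c * (h ord0 i * k)))).
Proof.
have H := DDadd (DDopp (DDcoord _ _ c ord0 i))
   (DDmul (DDmul (DDwf i) (DDAi i)) (DDinv DDHy Hy_c_neq0)).
exact: H.
Qed.

Lemma dFi i h : tangent h -> 'd (Fi i) c h = lam * h ord0 i.
Proof.
move=> th; have [_ ->] := dFi_all i.
have -> : sh h = 0 by [].
rewrite !wf_c Ai_c Hy_c k_val /lam.
have := n_gt2; have := w_gt0 => hw hn.
field; rewrite -/n; apply/and3P; split; rewrite gt_eqF //; lra.
Qed.

Lemma Fv_sum : Fv alpha = fun y : V => \sum_(j < N) Fi j y *: (delta_mx ord0 j : V).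
Proof.
apply/funext => y; rewrite [LHS]row_sum_delta.
by apply: eq_bigr => j _; rewrite Fv_coord.
Qed.

Lemma Fv_diff : differentiable (Fv alpha) c.
Proof.
rewrite Fv_sum.
have [D _] := @DDsum R V V _ (index_enum 'I_N) xpredT
  (fun j y => Fi j y *: (delta_mx ord0 j : V))
  (fun j h => 'd (Fi j) c h *: (delta_mx ord0 j : V))
  c (fun j _ => DDZl _ _ _ _ (@DDof _ _ _ _ _ (proj1 (dFi_all j)))).
exact: D.
Qed.

Lemma dFv h : tangent h -> 'd (Fv alpha) c h = lam *: h.
Proof.
move=> th; apply/rowP => i; rewrite [RHS]mxE -dFi //.
have [C1 C2] := DDcoord _ _ (Fv alpha c) 0 i.
have e : Fi i = (fun M : 'M[R]_(1, N) => M 0 i) \o Fv alpha.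
  apply/funext => y /=; rewrite -Fv_coord; congr (Fv alpha y _ i); exact/val_inj.
rewrite e (diff_comp Fv_diff C1) /=.
by rewrite C2.
Qed.

Lemma c_equilibrium : equilibrium alpha c.
Proof.
have hn := n_gt2; have hn0 := n_gt0; have hw := w_gt0.
split.
  split; first by move=> i; rewrite c_entry invr_ge0 ler0n.
  split.
    under eq_bigr do rewrite c_entry.
    by rewrite sumr_const card_ord -mulr_natl mulfV // gt_eqF.
  move=> i; rewrite c_entry.
  have : n^-1 * n = 1 by rewrite mulVf // gt_eqF.
  have : 0 < n^-1 by rewrite invr_gt0.
  nra.
apply/rowP => i; rewrite Fv_coord mxE /Fi c_entry wf_c Ai_c Hy_c.
field; rewrite -/n; apply/and3P; split; rewrite gt_eqF //; lra.
Qed.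

End Main.

Lemma eig_eq {R : realType} {N : nat} (L : 'rV[R]_N -> 'rV[R]_N) (lm a b : R) :
  (forall h, tangent h -> L h = lm *: h) -> eigenvalue_tangent L a b -> a = lm.
Proof.
move=> HL [x [y [tx [ty [nz [e1 e2]]]]]].
rewrite HL // in e1; rewrite HL // in e2.
have key : forall j, x 0 j != 0 \/ y 0 j != 0 -> a = lm.
  move=> j nzj.
  have E1 := congr1 (fun M : 'rV[R]_N => M 0 j) e1.
  have E2 := congr1 (fun M : 'rV[R]_N => M 0 j) e2.
  rewrite /= !mxE in E1 E2.
  have G1 : (lm - a) * x 0 j + b * y 0 j = 0 by rewrite mulrBl E1; ring.
  have G2 : (lm - a) * y 0 j - b * x 0 j = 0 by rewrite mulrBl E2; ring.
  have F1 : ((lm - a) ^+ 2 + b ^+ 2) * x 0 j = 0.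
    have -> : ((lm - a) ^+ 2 + b ^+ 2) * x 0 j = (lm - a) * ((lm - a) * x 0 j + b * y 0 j) - b * ((lm - a) * y 0 j - b * x 0 j) by ring.
    by rewrite G1 G2; ring.
  have F2 : ((lm - a) ^+ 2 + b ^+ 2) * y 0 j = 0.
    have -> : ((lm - a) ^+ 2 + b ^+ 2) * y 0 j = (lm - a) * ((lm - a) * y 0 j - b * x 0 j) + b * ((lm - a) * x 0 j + b * y 0 j) by ring.
    by rewrite G1 G2; ring.
  have : (lm - a) ^+ 2 + b ^+ 2 = 0.
    case: nzj => nz0.
      by move/eqP: F1; rewrite mulf_eq0 (negbTE nz0) orbF => /eqP.
    by move/eqP: F2; rewrite mulf_eq0 (negbTE nz0) orbF => /eqP.
  move=> h0; nra.
case: nz => nz.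
  have [j hj] : exists j, x 0 j != 0.
    apply/not_existsP => H; move/eqP: nz; apply; apply/rowP => j; rewrite mxE.
    by have := H j; move/negP; rewrite negbK => /eqP.
  by apply: (key j); left.
have [j hj] : exists j, y 0 j != 0.
  apply/not_existsP => H; move/eqP: nz; apply; apply/rowP => j; rewrite mxE.
  by have := H j; move/negP; rewrite negbK => /eqP.
by apply: (key j); right.
Qed.


Theorem lemma4p1 (R : realType) (N : nat) (alpha : R) :
  (3 <= N)%N -> 1 < alpha ->
  (alpha < (N%:R - 1) / (N%:R - 2) -> @linearly_stable R N alpha (simplex_center R N)) /\
  ((N%:R - 1) / (N%:R - 2) < alpha -> @linearly_unstable R N alpha (simplex_center R N)).
Proof.
move=> N3 ha.
have N0 : (0 < N)%N by apply: leq_trans N3.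
have hn : 2 < (N%:R : R) by rewrite ltr_nat.
have hn2 : 0 < (N%:R : R) - 2 by lra.
have hn1 : 0 < (N%:R : R) - 1 by lra.
split => H.
  split; first exact: c_equilibrium.
  split; first exact: Fv_diff.
  move=> a b E; rewrite (@eig_eq _ _ _ _ _ _ (@dFv R N alpha N0 N3) E) /lam.
  have h1 : alpha * (N%:R - 2) < N%:R - 1 by rewrite -ltr_pdivlMr.
  have : alpha * (N%:R - 2) / (N%:R - 1) < 1 by rewrite ltr_pdivrMr // mul1r.
  lra.
split; first exact: c_equilibrium.
split; first exact: Fv_diff.
have hlam : 0 < lam R N alpha.
  have h1 : N%:R - 1 < alpha * (N%:R - 2) by rewrite -ltr_pdivrMr.
  have : 1 < alpha * (N%:R - 2) / (N%:R - 1) by rewrite ltr_pdivlMr // mul1r.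
  rewrite /lam; lra.
exists (lam R N alpha), 0; split => //.
have N1 : (1 < N)%N by apply: leq_trans N3.
pose i0 : 'I_N := Ordinal N0.
pose i1 : 'I_N := Ordinal N1.
have hi : (i1 == i0) = false by [].
pose x : 'rV[R]_N := \row_j ((j == i0)%:R - (j == i1)%:R).
have sd : forall i : 'I_N, \sum_(j < N) ((j == i)%:R : R) = 1.
  move=> i; rewrite (bigD1 i) //= eqxx big1 ?addr0 // => j /negbTE -> //.
have tx : tangent x.
  rewrite /tangent.
  under eq_bigr do rewrite mxE.
  by rewrite sumrB !sd subrr.
exists x, 0; split => //; split; first by rewrite /tangent big1 // => j _; rewrite mxE.
split.
  left; apply/eqP => x0.
  have := congr1 (fun M : 'rV[R]_N => M 0 i0) x0; rewrite /x !mxE eqxx.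
  rewrite (_ : (i0 == i1) = false) // subr0 => /eqP; rewrite oner_eq0.
  by [].
split.
  by rewrite (@dFv R N alpha N0 N3) // scale0r subr0.
by rewrite linear0 scale0r scaler0 addr0.
Qed.
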